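(* Let $N\ge1$, $n\ge1$, let $P(z_1,\dots,z_n)$ be a symmetric Laurent polynomial, regarded as a multiplication operator on $F_{N,n}$, and let $\omega_*$ be as in the context. Then for every $f\in F_{N,n}$, $$\omega_*(Pf)=P(x_1^{-N},\dots,x_n^{-N})\,\omega_*(f).$$
   Context: For $k\in\mathbb Z$, $\underline{k}\in\{1,\dots,N\}$, $\overline{k}\in\mathbb Z$ unique with $k=\underline{k}-N\overline{k}$. $V=\mathbb C^N$ with basis $v_1,\dots,v_N$. On $\mathbb C[z_1^{\pm1},\dots,z_n^{\pm1}]\otimes V^{\otimes n}$, $K_{ij}$ swaps $z_i,z_j$ and $P_{ij}$ swaps the $i$-th and $j$-th factors of $V^{\otimes n}$; $F_{N,n}=\{f:K_{ij}f=-P_{ij}f\ \forall i\neq j\}$. For $k\in\mathbb Z^n$, $\hat u_k=\sum_{w\in S_n}\mathrm{sign}(w)z_1^{\overline{k_{w(1)}}}\cdots z_n^{\overline{k_{w(n)}}}\otimes v_{\underline{k_{w(1)}}}\otimes\cdots\otimes v_{\underline{k_{w(n)}}}$; the $\hat u_k$ with $k_1>\dots>k_n$ form a basis of $F_{N,n}$. For $k\in\mathbb Z^n$, $\hat a_k=\sum_{w\in S_n}\mathrm{sign}(w)x_{w(1)}^{k_1}\cdots x_{w(n)}^{k_n}$, a skew-symmetric Laurent polynomial in $x_1,\dots,x_n$. $\omega_*$ is the linear isomorphism from $F_{N,n}$ onto the space of skew-symmetric Laurent polynomials in $x_1,\dots,x_n$ with $\omega_*(\hat u_k)=\hat a_k$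 for $k_1>\dots>k_n$. *)

(* Defs.v *)
From mathcomp Require Import all_boot all_order all_algebra all_fingroup.
Set Implicit Arguments. Unset Strict Implicit. Unset Printing Implicit Defensive.
Import Order.TTheory GRing.Theory Num.Theory.
Local Open Scope ring_scope.

(* Exponent vectors (a_1,...,a_n) in Z^n, for monomials z^a or x^k. *)
Definition exps (n : nat) := {ffun 'I_n -> int}.
(* Label vectors (c_1,...,c_n) with c_i in {1,...,N}, indexing v_{c_1}⊗...⊗v_{c_n};
   labels outside {1..N} are forced to have coefficient 0 (see [inSpace]). *)
Definition labels (n : nat) := {ffun 'I_n -> nat}.

(* An element of C[z^{±1}] ⊗ V^{⊗n}: its coefficient f a c on z^a ⊗ v_c. *)
Definition tensorFun (K : Type) (n : nat) := exps n -> labels n -> K.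

(* Membership in the ambient space C[z_1^{±1},...,z_n^{±1}] ⊗ V^{⊗n}:
   finite support in z, and labels in {1..N}. *)
Definition inSpace (K : fieldType) (N n : nat) (f : tensorFun K n) : Prop :=
  (exists sa : seq (exps n), forall a c, f a c != 0 -> a \in sa) /\
  (forall a c, f a c != 0 -> forall i, (0 < c i <= N)%N).

Definition Kswap (K : Type) n (i j : 'I_n) (f : tensorFun K n) : tensorFun K n :=
  fun a c => f [ffun t => a (tperm i j t)] c.
Definition Pswap (K : Type) n (i j : 'I_n) (f : tensorFun K n) : tensorFun K n :=
  fun a c => f a [ffun t => c (tperm i j t)].

Definition inF (K : fieldType) (N n : nat) (f : tensorFun K n) : Prop :=
  inSpace N f /\
  forall i j : 'I_n, i != j -> forall a c, Kswap i j f a c = - Pswap i j f a c.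

(* k = under k - N * over k with under k in {1..N}. *)
Definition under (N : nat) (k : int) : nat := (absz ((k - 1) %% (N%:Z))%Z).+1.
Definition over (N : nat) (k : int) : int := - ((k - 1) %/ (N%:Z))%Z.

Definition sgn (K : fieldType) n (w : 'S_n) : K := (-1) ^+ (odd_perm w).

Definition uhat (K : fieldType) (N n : nat) (k : exps n) : tensorFun K n :=
  fun a c => \sum_(w : 'S_n)
     sgn K w * ((a == [ffun i => over N (k (w i))])
                && (c == [ffun i => under N (k (w i))]))%:R.

(* A Laurent polynomial in x_1..x_n, as its coefficient function. *)
Definition xpoly (K : Type) (n : nat) := exps n -> K.

(* \hat a_k = \sum_w sign(w) x_{w(1)}^{k_1} ... x_{w(n)}^{k_n}:
   the monomial has exponent e with e (w j) = k j, i.e. e = k ∘ w^{-1}. *)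
Definition ahat (K : fieldType) (n : nat) (k : exps n) : xpoly K n :=
  fun e => \sum_(w : 'S_n) sgn K w * (e == [ffun i => k ((w^-1)%g i)])%:R.

Definition decreasing n (k : exps n) : Prop :=
  forall i j : 'I_n, (i < j)%N -> k j < k i.

(* A Laurent polynomial P(z) = \sum_{(d,e) in s} d z^e, given by a finite list. *)
Definition lcoef (K : fieldType) n (s : seq (K * exps n)) (e : exps n) : K :=
  \sum_(p <- s) (p.2 == e)%:R * p.1.

Definition symmetricL (K : fieldType) n (s : seq (K * exps n)) : Prop :=
  forall (w : 'S_n) (e : exps n), lcoef s [ffun i => e (w i)] = lcoef s e.

Definition mulP (K : fieldType) n (s : seq (K * exps n)) (f : tensorFun K n)
  : tensorFun K n :=
  fun a c => \sum_(p <- s) p.1 * f [ffun i => a i - p.2 i] c.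

(* Multiplication by P(x_1^{-N},...,x_n^{-N}) on Laurent polynomials in x. *)
Definition mulPx (K : fieldType) (N : nat) n (s : seq (K * exps n)) (g : xpoly K n)
  : xpoly K n :=
  fun k => \sum_(p <- s) p.1 * g [ffun i => k i + (N%:Z) * p.2 i].

(* Main.v *)
Require Import Defs.
From mathcomp Require Import all_boot all_order all_algebra all_fingroup.
From mathcomp Require Import ring zify.

Set Implicit Arguments. Unset Strict Implicit. Unset Printing Implicit Defensive.
Import Order.TTheory GRing.Theory Num.Theory.
Local Open Scope ring_scope.

Lemma over_shift N x y : (0 < N)%N -> Defs.over N (x - N%:Z * y) = Defs.over N x + y.
Proof.
move=> hN; rewrite /Defs.over.
have -> : x - N%:Z * y - 1 = (- y) * N%:Z + (x - 1) by ring.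
rewrite divzMDl; last by case: N hN.
by rewrite opprD opprK addrC.
Qed.

Lemma under_shift N x y : Defs.under N (x - N%:Z * y) = Defs.under N x.
Proof.
rewrite /Defs.under.
have -> : x - N%:Z * y - 1 = (- y) * N%:Z + (x - 1) by ring.
by rewrite modzMDl.
Qed.

Lemma over_small N (c : nat) : (0 < c <= N)%N -> Defs.over N c%:Z = 0.
Proof.
move=> /andP[h1 h2]; rewrite /Defs.over divz_small ?oppr0 //.
apply/andP; split; first by rewrite subr_ge0.
rewrite gtz0_abs; last by rewrite ltz_nat; apply: leq_trans h2.
rewrite ltrBlDr -[c%:Z]/(Posz c) -[N%:Z]/(Posz N); lia.
Qed.

Lemma under_small N (c : nat) : (0 < c <= N)%N -> Defs.under N c%:Z = c.
Proof.
move=> /andP[h1 h2]; rewrite /Defs.under modz_small.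
  case: c h1 h2 => // m _ _.
  by have ->: (m.+1%:Z - 1 = m :> int)%R by rewrite -addn1 PoszD addrK.
rewrite -[c%:Z]/(Posz c) -[N%:Z]/(Posz N); lia.
Qed.

Lemma under_range N x : (0 < N)%N -> (0 < Defs.under N x <= N)%N.
Proof.
move=> hN; rewrite /Defs.under /=.
have h0 : (0 <= (x - 1) %% N%:Z)%Z by rewrite modz_ge0 //; case: N hN.
have h1 : ((x - 1) %% N%:Z < N%:Z)%Z by rewrite ltz_pmod.
move: h0 h1; case: ((x - 1) %% N%:Z)%Z => // m _; rewrite ltz_nat //.
Qed.
Section Perms.
Variable (K : numClosedFieldType) (n : nat).

Definition comp T (e : {ffun 'I_n -> T}) (w : 'S_n) : {ffun 'I_n -> T} :=
  [ffun i => e (w i)].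

Lemma compM T (e : {ffun 'I_n -> T}) x y : comp e (x * y)%g = comp (comp e y) x.
Proof. by apply/ffunP => i; rewrite !ffunE permM. Qed.

Lemma comp1 T (e : {ffun 'I_n -> T}) : comp e 1%g = e.
Proof. by apply/ffunP => i; rewrite !ffunE perm1. Qed.

Lemma compK T (e : {ffun 'I_n -> T}) w : comp (comp e w) w^-1%g = e.
Proof. by rewrite -compM mulVg comp1. Qed.

Lemma compKV T (e : {ffun 'I_n -> T}) w : comp (comp e w^-1%g) w = e.
Proof. by rewrite -compM mulgV comp1. Qed.

Lemma comp_inj (T : eqType) (e e' : {ffun 'I_n -> T}) w :
  (comp e w == comp e' w) = (e == e').
Proof.
apply/eqP/eqP => [h|->] //.
by rewrite -(compK e w) h compK.
Qed.

Lemma comp_eqV (T : eqType) (e e' : {ffun 'I_n -> T}) w :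
  (comp e w == e') = (e == comp e' w^-1%g).
Proof. by rewrite -(comp_inj e (comp e' w^-1%g) w) compKV. Qed.

Lemma sgnM (x y : 'S_n) : sgn K (x * y)%g = sgn K x * sgn K y.
Proof. by rewrite /sgn odd_permM signr_addb. Qed.

Lemma sgnV (x : 'S_n) : sgn K x^-1%g = sgn K x.
Proof. by rewrite /sgn odd_permV. Qed.

Lemma sgn_sq (x : 'S_n) : sgn K x * sgn K x = 1.
Proof. by rewrite /sgn -signr_addb addbb. Qed.

Lemma sgn1 : sgn K (1%g : 'S_n) = 1.
Proof. by rewrite /sgn odd_perm1. Qed.

Lemma sgn_tperm (i j : 'I_n) : i != j -> sgn K (tperm i j) = -1.
Proof. by move=> h; rewrite /sgn odd_tperm h expr1. Qed.

Lemma sum_sgn_r (F : 'S_n -> K) (t : 'S_n) : odd_perm t ->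
  (forall w, F (w * t)%g = F w) -> \sum_(w : 'S_n) sgn K w * F w = 0.
Proof.
move=> ht hF.
set S := \sum_(w : 'S_n) _.
have hS : S = - S.
  rewrite {1}/S (reindex_inj (mulIg t)) /= -sumrN; apply: eq_bigr => w _.
  by rewrite hF sgnM /sgn ht expr1 mulrN1 mulNr.
have : S *+ 2 == 0 by rewrite mulr2n {1}hS addNr.
by rewrite mulrn_eq0 /= => /eqP.
Qed.

Lemma sum_sgn_l (F : 'S_n -> K) (t : 'S_n) : odd_perm t ->
  (forall w, F (t * w)%g = F w) -> \sum_(w : 'S_n) sgn K w * F w = 0.
Proof.
move=> ht hF.
set S := \sum_(w : 'S_n) _.
have hS : S = - S.
  rewrite {1}/S (reindex_inj (mulgI t)) /= -sumrN; apply: eq_bigr => w _.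
  by rewrite hF sgnM /sgn ht expr1 mulN1r mulNr.
have : S *+ 2 == 0 by rewrite mulr2n {1}hS addNr.
by rewrite mulrn_eq0 /= => /eqP.
Qed.

End Perms.
Section Basis.
Variable (K : numClosedFieldType) (N n : nat).
Hypothesis hN : (0 < N)%N.

Definition ovf (k : exps n) : exps n := [ffun i => Defs.over N (k i)].
Definition unf (k : exps n) : labels n := [ffun i => Defs.under N (k i)].

Lemma uhatE (k : exps n) (a : exps n) (c : labels n) : uhat K N k a c =
  \sum_(w : 'S_n) sgn K w * ((a == comp (ovf k) w) && (c == comp (unf k) w))%:R.
Proof.
apply: eq_bigr => w _; congr (_ * (_ && _)%:R); congr (_ == _);
  by apply/ffunP => i; rewrite !ffunE.
Qed.

Lemma ahatE (k e : exps n) : ahat K k e = \sum_(w : 'S_n) sgn K w * (e == comp k w^-1%g)%:R.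
Proof. by []. Qed.

Lemma tpermM2 (i j : 'I_n) : (tperm i j * tperm i j = 1)%g.
Proof. by apply/permP => x; rewrite permM tpermK perm1. Qed.

Lemma inF_tperm (f : tensorFun K n) : inF N f -> forall i j : 'I_n, i != j ->
  forall a c, f (comp a (tperm i j)) (comp c (tperm i j)) = - f a c.
Proof.
move=> [_ hA] i j hij a c.
have := hA i j hij a (comp c (tperm i j)); rewrite /Kswap /Pswap => ->.
by rewrite -[[ffun t => _]]/(comp (comp c (tperm i j)) (tperm i j)) -compM tpermM2 comp1.
Qed.

Lemma inF_perm (f : tensorFun K n) : inF N f -> forall w a c,
  f (comp a w) (comp c w) = sgn K w * f a c.
Proof.
move=> hf w; case: (prod_tpermP w) => ts -> {w}.
elim: ts => [|t ts IH] /=.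
  by move=> _ a c; rewrite big_nil comp1 comp1 sgn1 mul1r.
move=> /andP[ht hts] a c; rewrite big_cons !compM inF_tperm // IH //.
by rewrite sgnM sgn_tperm // mulN1r mulNr.
Qed.

Lemma uhat_inF (k : exps n) : inF N (uhat K N k).
Proof.
split; first split.
- exists [seq comp (ovf k) w | w <- enum 'S_n] => a c; rewrite uhatE.
  apply: contraR => ha; apply/eqP; apply: big1 => w _.
  have h : a != comp (ovf k) w.
    by apply: contra ha => /eqP ->; apply: map_f; rewrite mem_enum.
  by rewrite (negbTE h) /= mulr0n mulr0.
- move=> a c; rewrite uhatE => hne i.
  case: (boolP [exists w, c == comp (unf k) w]) => [/existsP[w /eqP ->]|hno].
    by rewrite ffunE ffunE under_range.
  exfalso; move: hne; rewrite big1 ?eqxx // => w _.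
  have h : c != comp (unf k) w by apply: contra hno => h; apply/existsP; exists w.
  by rewrite (negbTE h) andbF mulr0n mulr0.
- move=> i j hij a c; rewrite /Kswap /Pswap.
  rewrite -[[ffun t => a _]]/(comp a (tperm i j)).
  rewrite -[[ffun t => c _]]/(comp c (tperm i j)).
  rewrite !uhatE (reindex_inj (mulgI (tperm i j))) /= -sumrN.
  apply: eq_bigr => w _; rewrite !compM comp_inj sgnM sgn_tperm // mulN1r mulNr.
  by congr (- (_ * (_ && _)%:R)); rewrite eq_sym comp_eqV tpermV eq_sym.
Qed.

End Basis.
From Stdlib Require Import FunctionalExtensionality.

Section Omega.
Variable (K : numClosedFieldType) (N n : nat).
Hypothesis hN : (0 < N)%N.
Variable omega : tensorFun K n -> xpoly K n.
Hypothesis hlin : forall f g : tensorFun K n, inF N f -> inF N g -> forall al be : K,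
     omega (fun a c => al * f a c + be * g a c) = (fun k => al * omega f k + be * omega g k).
Hypothesis hbasis : forall k : exps n, decreasing k -> omega (uhat K N k) = ahat K k.

Lemma ovf_comp (k : exps n) s : ovf N (comp k s) = comp (ovf N k) s.
Proof. by apply/ffunP => i; rewrite !ffunE. Qed.
Lemma unf_comp (k : exps n) s : unf N (comp k s) = comp (unf N k) s.
Proof. by apply/ffunP => i; rewrite !ffunE. Qed.

Lemma uhat_comp (k : exps n) (s : 'S_n) a c :
  uhat K N (comp k s) a c = sgn K s * uhat K N k a c.
Proof.
rewrite !uhatE ovf_comp unf_comp mulr_sumr (reindex_inj (mulIg s^-1%g)) /=.
apply: eq_bigr => w _; rewrite -!compM mulgKV sgnM sgnV.
by rewrite mulrA [sgn K w * _]mulrC.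
Qed.

Lemma ahat_comp (k : exps n) (s : 'S_n) e :
  ahat K (comp k s) e = sgn K s * ahat K k e.
Proof.
rewrite !ahatE mulr_sumr (reindex_inj (mulgI s)) /=.
apply: eq_bigr => w _; rewrite -!compM invMg mulgKV sgnM.
by rewrite mulrA.
Qed.

Lemma comp_fix T (e : {ffun 'I_n -> T}) (i j : 'I_n) : e i = e j ->
  comp e (tperm i j) = e.
Proof.
move=> h; apply/ffunP => x; rewrite ffunE.
by case: tpermP => [->|->|] //.
Qed.

Lemma uhat_rep (k : exps n) (i j : 'I_n) : i != j -> k i = k j ->
  forall a c, uhat K N k a c = 0.
Proof.
move=> hij hk a c; rewrite uhatE; apply: (sum_sgn_r (t := tperm i j)).
  by rewrite odd_tperm hij.
move=> w; rewrite !compM comp_fix; last by rewrite !ffunE hk.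
by rewrite comp_fix // !ffunE hk.
Qed.

Lemma ahat_rep (k : exps n) (i j : 'I_n) : i != j -> k i = k j ->
  forall e, ahat K k e = 0.
Proof.
move=> hij hk e; rewrite ahatE; apply: (sum_sgn_l (t := tperm i j)).
  by rewrite odd_tperm hij.
by move=> w; rewrite invMg compM tpermV comp_fix.
Qed.

Definition rk (k : exps n) (i : 'I_n) : nat := #|[set j | k i < k j]|.

Lemma rk_lt (k : exps n) i : (rk k i < n)%N.
Proof.
rewrite /rk; have := @proper_card _ [set j | k i < k j] [set: 'I_n].
rewrite cardsT card_ord; apply; rewrite properT.
apply/eqP => h; have : i \in [set j | k i < k j] by rewrite h inE.
by rewrite inE ltxx.
Qed.

Lemma rk_mono (k : exps n) x y : k x < k y -> (rk k y < rk k x)%N.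
Proof.
move=> hxy; apply: proper_card; apply/properP; split.
  by apply/subsetP => j; rewrite !inE => h; apply: lt_trans h.
by exists y; rewrite !inE ?hxy // ltxx.
Qed.

Lemma sort_exists (k : exps n) : injective k -> exists s : 'S_n, decreasing (comp k s).
Proof.
move=> inj.
pose r (i : 'I_n) : 'I_n := Ordinal (rk_lt k i).
have rinj : injective r.
  move=> x y /(congr1 val) /= h; apply/eqP; apply/negPn/negP => hne.
  have : k x != k y by apply: contra hne => /eqP /inj ->.
  case/lt_total/orP => /rk_mono; rewrite h ltnn //.
exists (perm rinj)^-1%g => i j hij; rewrite !ffunE.
set x := _ i; set y := _ j.
have rx : r x = i by rewrite /x -[r _]permE permKV.
have ry : r y = j by rewrite /y -[r _]permE permKV.
case: (ltgtP (k x) (k y)) => // h.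
  by have := rk_mono h; rewrite -[rk k y]/(val (r y)) -[rk k x]/(val (r x)) rx ry ltnNge (ltnW hij).
have : x = y by apply: inj.
by move=> exy; move: hij; rewrite -rx -ry exy ltnn.
Qed.

Lemma omega0 : omega (fun _ _ => 0) = (fun _ => 0).
Proof.
pose k0 : exps n := [ffun => 0].
have H := hlin (uhat_inF K hN k0) (uhat_inF K hN k0) 0 0.
have E1 : (fun (a : exps n) (c : labels n) => 0 * uhat K N k0 a c + 0 * uhat K N k0 a c)
   = (fun _ _ => 0).
  by do 2 (apply: functional_extensionality => ?); rewrite !mul0r addr0.
rewrite E1 in H; rewrite H; apply: functional_extensionality => ?.
by rewrite !mul0r addr0.
Qed.

Lemma omega_uhat (k : exps n) : omega (uhat K N k) = ahat K k.
Proof.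
case: (boolP [exists i, exists j, (i != j) && (k i == k j)]).
  move=> /existsP[i /existsP[j /andP[hij /eqP hk]]].
  have -> : uhat K N k = fun _ _ => 0.
    by do 2 (apply: functional_extensionality => ?); rewrite (uhat_rep hij hk).
  rewrite omega0; apply: functional_extensionality => e.
  by rewrite (ahat_rep hij hk).
move=> hno.
have inj : injective k.
  move=> x y hxy; apply/eqP; apply: contraNT hno => hne.
  by apply/existsP; exists x; apply/existsP; exists y; rewrite hne hxy eqxx.
have [s hs] := sort_exists inj.
have -> : uhat K N k = fun a c => sgn K s * uhat K N (comp k s) a c
                               + 0 * uhat K N (comp k s) a c.
  do 2 (apply: functional_extensionality => ?).
  by rewrite uhat_comp mul0r addr0 mulrA sgn_sq mul1r.
rewrite hlin; try exact: uhat_inF.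
rewrite hbasis //; apply: functional_extensionality => e.
by rewrite ahat_comp mul0r addr0 mulrA sgn_sq mul1r.
Qed.

End Omega.
Section Lin.
Variable (K : numClosedFieldType) (N n : nat).
Hypothesis hN : (0 < N)%N.
Variable omega : tensorFun K n -> xpoly K n.
Hypothesis hlin : forall f g : tensorFun K n, inF N f -> inF N g -> forall al be : K,
     omega (fun a c => al * f a c + be * g a c) = (fun k => al * omega f k + be * omega g k).
Hypothesis hbasis : forall k : exps n, decreasing k -> omega (uhat K N k) = ahat K k.

Lemma inF_lin (f g : tensorFun K n) al be : inF N f -> inF N g ->
  inF N (fun a c => al * f a c + be * g a c).
Proof.
move=> [[[sa1 h1] l1] A1] [[[sa2 h2] l2] A2]; split; first split.
- exists (sa1 ++ sa2) => a c hne; rewrite mem_cat.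
  case: (boolP (f a c != 0)) => [hf|/negPn/eqP hf]; first by rewrite (h1 _ _ hf).
  case: (boolP (g a c != 0)) => [hg|/negPn/eqP hg]; first by rewrite (h2 _ _ hg) orbT.
  by move: hne; rewrite hf hg !mulr0 addr0 eqxx.
- move=> a c hne.
  case: (boolP (f a c != 0)) => [hf|/negPn/eqP hf]; first exact: (l1 _ _ hf).
  case: (boolP (g a c != 0)) => [hg|/negPn/eqP hg]; first exact: (l2 _ _ hg).
  by move: hne; rewrite hf hg !mulr0 addr0 eqxx.
- move=> i j hij a c; rewrite /Kswap /Pswap.
  have := A1 i j hij a c; have := A2 i j hij a c; rewrite /Kswap /Pswap => -> ->.
  by rewrite !mulrN opprD.
Qed.

Definition Ssum (I : Type) (L : seq I) (cf : I -> K) (kf : I -> exps n) : tensorFun K n :=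
  fun a c => \sum_(i <- L) cf i * uhat K N (kf i) a c.

Lemma lin_gen (I : Type) (L : seq I) (cf : I -> K) (kf : I -> exps n) :
  inF N (Ssum L cf kf) /\
  omega (Ssum L cf kf) = fun m => \sum_(i <- L) cf i * ahat K (kf i) m.
Proof.
pose k0 : exps n := [ffun => 0].
elim: L => [|x L [IH1 IH2]].
  have -> : Ssum [::] cf kf = fun a c => 0 * uhat K N k0 a c + 0 * uhat K N k0 a c.
    do 2 (apply: functional_extensionality => ?).
    by rewrite /Ssum big_nil !mul0r addr0.
  split; first by apply: inF_lin; apply: uhat_inF.
  rewrite hlin; try exact: uhat_inF.
  by apply: functional_extensionality => m; rewrite big_nil !mul0r addr0.
have -> : Ssum (x :: L) cf kf =
    fun a c => cf x * uhat K N (kf x) a c + 1 * Ssum L cf kf a c.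
  do 2 (apply: functional_extensionality => ?).
  by rewrite /Ssum big_cons mul1r.
split; first by apply: inF_lin => //; apply: uhat_inF.
rewrite hlin //; last exact: uhat_inF.
apply: functional_extensionality => m.
by rewrite big_cons mul1r IH2 (omega_uhat hN hlin hbasis).
Qed.
End Lin.
Section Sym.
Variable (K : numClosedFieldType) (N n : nat).
Hypothesis hN : (0 < N)%N.
Variable s : seq (K * exps n).
Hypothesis hs : symmetricL s.

Lemma regroup (g : exps n -> exps n) (T : seq (exps n)) (Q : pred (exps n)) :
  uniq T -> (forall p, p \in s -> g p.2 \in T) ->
  \sum_(p <- s) p.1 * (Q (g p.2))%:R =
  \sum_(e <- T) (Q e)%:R * \sum_(p <- s) (g p.2 == e)%:R * p.1.
Proof.
move=> uT hT.
under [RHS]eq_bigr do rewrite mulr_sumr.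
rewrite exchange_big /= big_seq [RHS]big_seq; apply: eq_bigr => p hp.
rewrite (bigD1_seq (g p.2)) ?hT //= eqxx mul1r big1 ?addr0; first by rewrite mulrC.
by move=> e /negbTE; rewrite eq_sym => ->; rewrite mulr0n mul0r mulr0.
Qed.

Definition Tclos : seq (exps n) :=
  undup [seq comp p.2 w | p <- s, w <- enum 'S_n].

Lemma Tclos_mem p w : p \in s -> comp p.2 w \in Tclos.
Proof.
move=> hp; rewrite mem_undup; apply/allpairsP; exists (p, w) => /=.
by rewrite hp mem_enum.
Qed.

Lemma symsum (Q : pred (exps n)) (w : 'S_n) :
  \sum_(p <- s) p.1 * (Q (comp p.2 w))%:R = \sum_(p <- s) p.1 * (Q p.2)%:R.
Proof.
rewrite (@regroup (fun e => comp e w) Tclos) ?undup_uniq //; last first.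
  by move=> p hp; apply: Tclos_mem.
rewrite (@regroup id Tclos) ?undup_uniq //; last first.
  by move=> p hp /=; rewrite -[p.2](comp1) Tclos_mem.
apply: eq_bigr => e _; congr (_ * _).
under eq_bigr do rewrite comp_eqV.
have := hs w^-1%g e; rewrite /lcoef => <-.
by apply: eq_bigr => p _; rewrite /=.
Qed.

End Sym.
Section Shift.
Variable (K : numClosedFieldType) (N n : nat).
Hypothesis hN : (0 < N)%N.
Variable s : seq (K * exps n).
Hypothesis hs : symmetricL s.

Definition kshift (k e : exps n) : exps n := [ffun i => k i - N%:Z * e i].

Lemma mulP_uhat (k : exps n) a c :
  mulP s (uhat K N k) a c = \sum_(p <- s) p.1 * uhat K N (kshift k p.2) a c.
Proof.
pose Q (w : 'S_n) (e : exps n) :=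
  ([ffun i => a i - e i] == comp (ovf N k) w) && (c == comp (unf N k) w).
have L1 : mulP s (uhat K N k) a c =
    \sum_(w : 'S_n) sgn K w * \sum_(p <- s) p.1 * (Q w p.2)%:R.
  rewrite /mulP; under eq_bigr do rewrite uhatE mulr_sumr.
  rewrite exchange_big /=; apply: eq_bigr => w _; rewrite mulr_sumr.
  by apply: eq_bigr => p _; rewrite mulrCA.
have L2 : \sum_(p <- s) p.1 * uhat K N (kshift k p.2) a c =
    \sum_(w : 'S_n) sgn K w * \sum_(p <- s) p.1 * (Q w (comp p.2 w))%:R.
  under eq_bigr do rewrite uhatE mulr_sumr.
  rewrite exchange_big /=; apply: eq_bigr => w _; rewrite mulr_sumr.
  apply: eq_bigr => p _; rewrite mulrCA; congr (_ * (_ * _%:R)).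
  rewrite /Q; congr (_ && _).
    apply/eqP/eqP => h; apply/ffunP => i; move/ffunP: h => /(_ i); rewrite !ffunE.
      by move=> ->; rewrite over_shift // addrK.
    by rewrite over_shift // => <-; rewrite subrK.
  congr (_ == _); apply/ffunP => i; rewrite !ffunE.
  by rewrite under_shift.
rewrite L1 L2; apply: eq_bigr => w _; congr (_ * _).
by rewrite (symsum hs (Q w) w).
Qed.

Lemma mulPx_ahat (k : exps n) m :
  mulPx N s (ahat K k) m = \sum_(p <- s) p.1 * ahat K (kshift k p.2) m.
Proof.
pose Q (w : 'S_n) (e : exps n) :=
  ([ffun i => m i + N%:Z * e i] == comp k w^-1%g).
have L1 : mulPx N s (ahat K k) m =
    \sum_(w : 'S_n) sgn K w * \sum_(p <- s) p.1 * (Q w p.2)%:R.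
  rewrite /mulPx; under eq_bigr do rewrite ahatE mulr_sumr.
  rewrite exchange_big /=; apply: eq_bigr => w _; rewrite mulr_sumr.
  by apply: eq_bigr => p _; rewrite mulrCA.
have L2 : \sum_(p <- s) p.1 * ahat K (kshift k p.2) m =
    \sum_(w : 'S_n) sgn K w * \sum_(p <- s) p.1 * (Q w (comp p.2 w^-1%g))%:R.
  under eq_bigr do rewrite ahatE mulr_sumr.
  rewrite exchange_big /=; apply: eq_bigr => w _; rewrite mulr_sumr.
  apply: eq_bigr => p _; rewrite mulrCA; congr (_ * (_ * _%:R)).
  rewrite /Q; congr (nat_of_bool _); apply/idP/idP => /eqP h; apply/eqP; apply/ffunP => i;
    move/ffunP: h => /(_ i); rewrite !ffunE.
    by move=> ->; rewrite subrK.
  by move=> <-; rewrite addrK.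
rewrite L1 L2; apply: eq_bigr => w _; congr (_ * _).
by rewrite (symsum hs (Q w) w^-1%g).
Qed.

End Shift.
Section Decomp.
Variable (K : numClosedFieldType) (N n : nat).
Hypothesis hN : (0 < N)%N.
Variable f : tensorFun K n.
Hypothesis hf : inF N f.

Definition lab (c' : {ffun 'I_n -> 'I_N}) : labels n := [ffun i => (c' i).+1].

Lemma lab_inj : injective lab.
Proof.
move=> x y /ffunP h; apply/ffunP => i; have := h i; rewrite !ffunE => -[e].
exact: val_inj.
Qed.

Definition kfD (q : exps n * {ffun 'I_n -> 'I_N}) : exps n :=
  [ffun i => (lab q.2 i)%:Z - N%:Z * q.1 i].

Definition cfD (q : exps n * {ffun 'I_n -> 'I_N}) : K :=
  f q.1 (lab q.2) / (n`!)%:R.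

Lemma lab_range c' i : (0 < lab c' i <= N)%N.
Proof. by rewrite ffunE /=. Qed.

Lemma ovf_kfD q : ovf N (kfD q) = q.1.
Proof.
apply/ffunP => i; rewrite !ffunE over_shift //.
by have := over_small (lab_range q.2 i); rewrite ffunE => ->; rewrite add0r.
Qed.

Lemma unf_kfD q : unf N (kfD q) = lab q.2.
Proof.
apply/ffunP => i; rewrite !ffunE under_shift.
by have := under_small (lab_range q.2 i); rewrite ffunE => ->.
Qed.

Lemma pick (A : seq (exps n)) (a1 : exps n) (c1 : labels n) :
  uniq A -> (f a1 c1 != 0 -> a1 \in A) ->
  \sum_(q <- [seq (x, y) | x <- A, y <- enum {ffun 'I_n -> 'I_N}])
     f q.1 (lab q.2) * ((q.1 == a1) && (lab q.2 == c1))%:R = f a1 c1.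
Proof.
move=> uA hA; rewrite big_allpairs /=.
case: (boolP (f a1 c1 == 0)) => [/eqP h0|hne].
  rewrite h0; apply: big1 => a _; apply: big1 => c' _.
  case: (boolP ((a == a1) && (lab c' == c1))) => [/andP[/eqP -> /eqP ->]|_].
    by rewrite h0 mul0r.
  by rewrite mulr0n mulr0.
have [[_ hl] _] := hf.
have H : forall i, ((c1 i).-1 < N)%N.
  by move=> i; have /andP[h1 h2] := hl a1 c1 hne i; case: (c1 i) h1 h2.
pose c1' : {ffun 'I_n -> 'I_N} := [ffun i => Ordinal (H i)].
have hc1 : lab c1' = c1.
  apply/ffunP => i; rewrite !ffunE /=.
  by have /andP[h1 h2] := hl a1 c1 hne i; case: (c1 i) h1 h2.
rewrite (bigD1_seq a1) ?hA //= [X in _ + X]big1 ?addr0; last first.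
  move=> a /negbTE ha; apply: big1 => c' _; rewrite ha /=.
  by rewrite mulr0n mulr0.
rewrite (bigD1_seq c1') ?mem_enum ?enum_uniq //= [X in _ + X]big1 ?addr0; last first.
  move=> c' hc'; rewrite -hc1 (inj_eq lab_inj) (negbTE hc') andbF.
  by rewrite mulr0n mulr0.
by rewrite eqxx hc1 eqxx mulr1.
Qed.

End Decomp.
Section Decomp2.
Variable (K : numClosedFieldType) (N n : nat).
Hypothesis hN : (0 < N)%N.
Variable f : tensorFun K n.
Hypothesis hf : inF N f.

Lemma decomp (sa : seq (exps n)) : (forall a c, f a c != 0 -> a \in sa) ->
  f = Ssum N [seq (x, y) | x <- undup sa, y <- enum {ffun 'I_n -> 'I_N}]
           (cfD f) (@kfD N n).
Proof.
move=> hsa; apply: functional_extensionality => a0;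
  apply: functional_extensionality => c0; rewrite /Ssum.
under eq_bigr do rewrite uhatE ovf_kfD // unf_kfD // mulr_sumr.
rewrite exchange_big /=.
have E : forall w : 'S_n, \sum_(q <- [seq (x, y) | x <- undup sa, y <- enum {ffun 'I_n -> 'I_N}])
    cfD f q * (sgn K w * ((a0 == comp q.1 w) && (c0 == comp (lab q.2) w))%:R)
  = f a0 c0 / (n`!)%:R.
  move=> w.
  transitivity (sgn K w / (n`!)%:R *
    \sum_(q <- [seq (x, y) | x <- undup sa, y <- enum {ffun 'I_n -> 'I_N}])
     f q.1 (lab q.2) * ((q.1 == comp a0 w^-1%g) && (lab q.2 == comp c0 w^-1%g))%:R).
    rewrite mulr_sumr; apply: eq_bigr => q _.
    rewrite (eq_sym a0) comp_eqV (eq_sym c0) comp_eqV /cfD; ring.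
  rewrite pick ?undup_uniq //; last by move=> h; rewrite mem_undup; apply: (hsa _ _ h).
  rewrite (inF_perm hf) sgnV.
  by rewrite mulrCA !mulrA sgn_sq mul1r mulrC.
rewrite (eq_bigr _ (fun w _ => E w)) sumr_const card_Sn -[RHS]mulr_natr.
by rewrite divfK // pnatr_eq0 -lt0n fact_gt0.
Qed.

End Decomp2.

Theorem lemma3 (K : numClosedFieldType) (N n : nat) (hN : (0 < N)%N) (hn : (0 < n)%N)
  (s : seq (K * exps n)) (hs : symmetricL s)
  (omega : tensorFun K n -> xpoly K n)
  (hlin : forall f g : tensorFun K n, inF N f -> inF N g -> forall al be : K,
     omega (fun a c => al * f a c + be * g a c) = (fun k => al * omega f k + be * omega g k))
  (hbasis : forall k : exps n, decreasing k -> omega (uhat K N k) = ahat K k)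
  (f : tensorFun K n) (hf : inF N f) :
  omega (mulP s f) = mulPx N s (omega f).
Proof.
have [[[sa hsa] _] _] := hf.
have hD := decomp hN hf hsa.
rewrite hD.
set L := [seq (x, y) | x <- undup sa, y <- enum {ffun 'I_n -> 'I_N}].
set cf := cfD f; set kf := @kfD N n.
pose L2 := [seq (x, y) | x <- L, y <- s].
pose cf2 := fun qp : (exps n * {ffun 'I_n -> 'I_N}) * (K * exps n) => cf qp.1 * qp.2.1.
pose kf2 := fun qp : (exps n * {ffun 'I_n -> 'I_N}) * (K * exps n) => kshift N (kf qp.1) qp.2.2.
have hM : mulP s (Ssum N L cf kf) = Ssum N L2 cf2 kf2.
  apply: functional_extensionality => a; apply: functional_extensionality => c.
  rewrite /Ssum /L2 /cf2 /kf2 big_allpairs /=.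
  rewrite {1}/mulP; under [LHS]eq_bigr do rewrite mulr_sumr.
  rewrite exchange_big /=; apply: eq_bigr => q _.
  transitivity (cf q * mulP s (uhat K N (kf q)) a c).
    by rewrite /mulP mulr_sumr; apply: eq_bigr => p _; rewrite mulrCA.
  by rewrite mulP_uhat // mulr_sumr; apply: eq_bigr => p _; rewrite mulrA.
rewrite hM (lin_gen hN hlin hbasis L2 cf2 kf2).2 (lin_gen hN hlin hbasis L cf kf).2.
apply: functional_extensionality => m.
rewrite /L2 /cf2 /kf2 big_allpairs /= /mulPx.
under [RHS]eq_bigr do rewrite mulr_sumr.
rewrite [RHS]exchange_big /=; apply: eq_bigr => q _.
transitivity (cf q * mulPx N s (ahat K (kf q)) m).
  by rewrite mulPx_ahat // mulr_sumr; apply: eq_bigr => p _; rewrite mulrA.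
by rewrite /mulPx mulr_sumr; apply: eq_bigr => p _; rewrite mulrCA.
Qed.
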